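(* Let $D$ be a finite set, $k\ge 2$, and let $P:D^k\to\{0,1\}$ be a $k$-ary predicate with $P^{-1}(1)\neq\emptyset$. Suppose there exists $z\in D$ such that for all $x_1,\dots,x_{k-1}\in D$ and all permutations $\sigma$ of the $k$ coordinates, $P(\sigma(x_1,\dots,x_{k-1},z))=0$. Then for every weighted directed $k$-uniform hypergraph $H=(V,E,w)$, every $0<\varepsilon<1$, and every $\varepsilon$-$P$-sparsifier $H_\varepsilon=(V,E_\varepsilon,w_\varepsilon)$ of $H$, we have $|E_\varepsilon|=\Omega(|E|)$, with the implied constant independent of $H$ and $\varepsilon$.
   Context: $\sigma(\cdot)$ permutes the entries of a tuple. A weighted directed $k$-uniform hypergraph $H=(V,E,w)$ has $E$ a set of ordered $k$-tuples of distinct vertices and $w:E\to\mathbb{R}_{>0}$. For $A:V\to D$, $\mathrm{Val}_{H,P}(A)=\sum_{e\in E}w(e)P(A(e))$ with $A$ applied entrywise. An $\varepsilon$-$P$-sparsifier of $H$ is $H_\varepsilon=(V,E_\varepsilon,w_\varepsilon)$ with $E_\varepsilon\subseteq E$, $w_\varepsilon:E_\varepsilon\to\mathbb{R}_{>0}$, such that for every $A:V\to D$, $(1-\varepsilon)\mathrm{Val}_{H,P}(A)\le\mathrm{Val}_{H_\varepsilon,P}(A)\le(1+\varepsilon)\mathrm{Val}_{H,P}(A)$. *)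

(* Defs.v *)
From HB Require Import structures.
From mathcomp Require Import all_boot all_order all_fingroup all_algebra.
Set Implicit Arguments. Unset Strict Implicit. Unset Printing Implicit Defensive.
Import Order.TTheory GRing.Theory Num.Theory.
Local Open Scope ring_scope.

(* The k-tuple (x_1, ..., x_{k-1}, z), for x : 'I_(k.-1) -> D. *)
Definition snoc_tuple (D : Type) (k : nat) (x : 'I_k.-1 -> D) (z : D) : 'I_k -> D :=
  fun i => match @insub nat (fun n => n < k.-1)%N _ (val i) with
           | Some j => x j | None => z end.

Definition perm_tuple (D : Type) (k : nat) (s : 'S_k) (t : 'I_k -> D) : 'I_k -> D :=
  fun i => t (s i).

(* Directed k-uniform hyperedges: ordered k-tuples of distinct vertices. *)
Definition hyperedges_ok (V : finType) (k : nat) (E : {set {ffun 'I_k -> V}}) : Prop :=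
  forall e, e \in E -> injective e.

Definition app_edge (V D : Type) (k : nat) (A : V -> D) (e : {ffun 'I_k -> V}) : 'I_k -> D :=
  fun i => A (e i).

Definition Val (R : numDomainType) (V D : finType) (k : nat) (P : ('I_k -> D) -> bool)
  (E : {set {ffun 'I_k -> V}}) (w : {ffun 'I_k -> V} -> R) (A : V -> D) : R :=
  \sum_(e in E) w e * (P (app_edge A e))%:R.

Definition is_sparsifier (R : numDomainType) (V D : finType) (k : nat)
  (P : ('I_k -> D) -> bool) (eps : R)
  (E : {set {ffun 'I_k -> V}}) (w : {ffun 'I_k -> V} -> R)
  (Eeps : {set {ffun 'I_k -> V}}) (weps : {ffun 'I_k -> V} -> R) : Prop :=
  Eeps \subset E /\ (forall e, e \in Eeps -> 0 < weps e) /\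
  forall A : V -> D,
    (1 - eps) * Val P E w A <= Val P Eeps weps A /\
    Val P Eeps weps A <= (1 + eps) * Val P E w A.

(* Main.v *)
Require Import Defs.
From HB Require Import structures.
From mathcomp Require Import all_boot all_order all_fingroup all_algebra.
From Stdlib Require Import FunctionalExtensionality.
Import Order.TTheory GRing.Theory Num.Theory.
Local Open Scope ring_scope.

Lemma snoc_perm (D : Type) (n : nat) (u : 'I_n.+2 -> D) (z : D) (i : 'I_n.+2) :
  u i = z -> exists (x : 'I_n.+1 -> D) (s : 'S_n.+2),
    u = perm_tuple s (@snoc_tuple D n.+2 x z).
Proof.
move=> ui.
pose s : 'S_n.+2 := tperm i ord_max.
exists (fun j => u (s (widen_ord (leqnSn _) j))), s.
apply: functional_extensionality => j.
rewrite /perm_tuple /snoc_tuple /=.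
case: insubP => [m Hm Hval | Hn].
  have -> : widen_ord (leqnSn n.+1) m = s j by apply: val_inj.
  by rewrite tpermK.
have Hsj : s j = ord_max.
  apply: val_inj => /=; have := ltn_ord (s j); move: Hn; rewrite -leqNgt.
  move=> H1 H2; apply/eqP; rewrite eqn_leq H1 andbT; by [].
have -> : j = i.
  by rewrite -(tpermK i ord_max j) -/s Hsj tpermR.
by [].
Qed.

Definition img (V : finType) (k : nat) (e : {ffun 'I_k -> V}) : {set V} :=
  [set e i | i : 'I_k].
Arguments img {V k}.

Lemma card_bigcup_le (T I : finType) (A : {pred I}) (F : I -> {set T}) :
  (#|\bigcup_(i in A) F i| <= \sum_(i in A) #|F i|)%N.
Proof.
apply: (big_ind2 (fun (S : {set T}) (m : nat) => #|S| <= m)%N).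
- by rewrite cards0.
- move=> S1 m1 S2 m2 H1 H2; rewrite cardsU.
  apply: leq_trans (leq_subr _ _) _; exact: leq_add.
- by [].
Qed.

Lemma cover (R : realFieldType) (D : finType) (n : nat)
  (P : ('I_n.+2 -> D) -> bool) (t : 'I_n.+2 -> D) (z : D)
  (V : finType) (E : {set {ffun 'I_n.+2 -> V}}) (w : {ffun 'I_n.+2 -> V} -> R)
  (eps : R) (Eeps : {set {ffun 'I_n.+2 -> V}}) (weps : {ffun 'I_n.+2 -> V} -> R) :
  P t ->
  (forall (x : 'I_n.+1 -> D) (s : 'S_n.+2),
      P (perm_tuple s (@snoc_tuple D n.+2 x z)) = false) ->
  hyperedges_ok E ->
  (forall e, e \in E -> 0 < w e) ->
  0 < eps < 1 ->
  is_sparsifier P eps E w Eeps weps ->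
  forall e, e \in E -> exists2 e', e' \in Eeps & forall i, e i \in img e'.
Proof.
move=> Pt Hz Hinj wpos /andP[eps0 eps1] [sub [wepos Hsp]] e eE.
pose A := fun v : V => if [pick i | e i == v] is Some i then t i else z.
have Ae : app_edge A e = t.
  apply: functional_extensionality => i; rewrite /app_edge /A.
  case: pickP => [j /eqP Hj | H]; first by rewrite (Hinj e eE _ _ Hj).
  by have := H i; rewrite eqxx.
have Hout : forall e' : {ffun 'I_n.+2 -> V}, (exists i, e' i \notin img e) ->
    P (app_edge A e') = false.
  move=> e' [i Hi].
  have : app_edge A e' i = z.
    rewrite /app_edge /A; case: pickP => [j /eqP Hj | //].
    by move: Hi; rewrite -Hj /img imset_f.
  move=> /(@snoc_perm D n (app_edge A e')) [x [s ->]]; exact: Hz.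
have Vpos : 0 < Val P E w A.
  rewrite /Val (bigD1 e) //= Ae Pt mulr1.
  apply: ltr_wpDr; last exact: wpos.
  apply: sumr_ge0 => i /andP[iE _]; apply: mulr_ge0; last exact: ler0n.
  exact: ltW (wpos _ iE).
have Vepos : 0 < Val P Eeps weps A.
  have [H1 _] := Hsp A; apply: lt_le_trans H1.
  by apply: mulr_gt0 => //; rewrite subr_gt0.
have [e' e'E Pe'] : exists2 e', e' \in Eeps & P (app_edge A e').
  apply/exists_inP; apply: contraTT Vepos => /exists_inPn H.
  rewrite /Val big1 ?ltxx // => i iE; by rewrite (negbTE (H i iE)) mulr0.
exists e' => //.
have sube : img e' \subset img e.
  apply/subsetP => v /imsetP [j _ ->].
  apply: contraTT Pe' => Hj; apply/negbT; apply: Hout; by exists j.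
have e'inj : injective e' by apply: Hinj; exact: (subsetP sub).
have : img e' == img e.
  rewrite eqEcard sube /= /img (card_imset _ e'inj) cardT size_enum_ord.
  apply: leq_trans (leq_imset_card _ _) _; by rewrite cardT size_enum_ord.
by move/eqP => -> i; rewrite /img imset_f.
Qed.

Theorem proposition17 (R : realFieldType) (D : finType) (k : nat)
  (P : ('I_k -> D) -> bool) :
  (2 <= k)%N ->
  (exists t : 'I_k -> D, P t) ->
  (exists z : D, forall (x : 'I_k.-1 -> D) (s : 'S_k),
      P (perm_tuple s (snoc_tuple x z)) = false) ->
  exists c : R, 0 < c /\
    forall (V : finType) (E : {set {ffun 'I_k -> V}}) (w : {ffun 'I_k -> V} -> R)
           (eps : R) (Eeps : {set {ffun 'I_k -> V}}) (weps : {ffun 'I_k -> V} -> R),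
      hyperedges_ok E ->
      (forall e, e \in E -> 0 < w e) ->
      0 < eps < 1 ->
      is_sparsifier P eps E w Eeps weps ->
      c * (#|E|%:R) <= (#|Eeps|%:R).
Proof.
move: P; case: k => [|[|n]] // P _ [t Pt] [z Hz].
exists (1 / (n.+2 ^ n.+2)%:R); split.
  by rewrite divr_gt0 // ltr0n expn_gt0.
move=> V E w eps Eeps weps Hinj wpos heps hsp.
have cov := @cover R D n P t z V E w eps Eeps weps Pt Hz Hinj wpos heps hsp.
have Hnat : (#|E| <= #|Eeps| * n.+2 ^ n.+2)%N.
  pose F (e' : {ffun 'I_n.+2 -> V}) :=
    [set e : {ffun 'I_n.+2 -> V} | [forall i, e i \in img e']].
  have : E \subset \bigcup_(e' in Eeps) F e'.
    apply/subsetP => e eE; have [e' e'E He] := cov e eE.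
    apply/bigcupP; exists e' => //; rewrite inE; apply/forallP => i; exact: He.
  move/subset_leq_card => HH; apply: leq_trans HH _.
  apply: leq_trans (card_bigcup_le _ _ _ _) _.
  rewrite -sum_nat_const; apply: leq_sum => e' _.
  have -> : #|F e'| = #|@ffun_on_mem 'I_n.+2 _ (mem (img e'))|.
    by apply: eq_card => e; rewrite inE; apply/forallP/ffun_onP.
  rewrite card_ffun_on card_ord leq_exp2r //.
  by apply: leq_trans (leq_imset_card _ _) _; rewrite cardT size_enum_ord.
rewrite div1r mulrC ler_pdivrMr; last by rewrite ltr0n expn_gt0.
by rewrite -natrM ler_nat.
Qed.
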